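(* Let $\mathcal C$ be an infinitary clone $\tau$-algebra and $a\in C$. Then $a$ is central if and only if the following hold for all elements of $C$: (C1) $q(a,x,x,\dots)=x$; (C2) $q\big(a,\,q(a,x_0^0,x_0^1,\dots),\,q(a,x_1^0,x_1^1,\dots),\,q(a,x_2^0,x_2^1,\dots),\dots\big)=q(a,x_0^0,x_1^1,x_2^2,\dots)$; (C3) $q\big(a,\,q(y_0,z_0^0,z_1^0,\dots),\,q(y_1,z_0^1,z_1^1,\dots),\dots\big)=q\big(q(a,y_0,y_1,\dots),\,q(a,z_0^0,z_0^1,\dots),\,q(a,z_1^0,z_1^1,\dots),\dots\big)$.
   Context: $\tau$ is a set of $\omega$-ary operation symbols disjoint from $\{q\}\cup\{e_i:i\in\omega\}$. An infinitary clone $\tau$-algebra is an algebra $\mathcal C$ with constants $e_i$ ($i\in\omega$), a constant $f$ for each $f\in\tau$, and an $\omega$-ary operation $q$, satisfying (N1) $q(e_i,x_0,x_1,\dots)=x_i$; (N2) $q(x,e_0,e_1,\dots)=x$; (N3) $q(q(x,y_0,y_1,\dots),\boldsymbol z)=q(x,q(y_0,\boldsymbol z),q(y_1,\boldsymbol z),\dots)$ with $\boldsymbol z=(z_0,z_1,\dots)$. A sequence $(\theta_0,\theta_1,\dots)$ of congruences of $\mathcal C$ is a sequence of complementary factor congruences if $\bigcap_{i\in\omega}\theta_i$ is the identity relation on $C$ and for every $s\in C^\omega$ there is $b\in C$ with $(b,s_i)\in\theta_i$ for all $i\in\omega$. An element $a\in C$ is central if the principal congruences $\theta(a,e_i)$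 generated by the pairs $(a,e_i)$, $i\in\omega$, form a sequence of complementary factor congruences. *)

(* Defs.v *)
Record ICA (tau : Type) := {
  carrier :> Type;
  e : nat -> carrier;
  fconst : tau -> carrier;
  q : carrier -> (nat -> carrier) -> carrier;
  N1 : forall (i : nat) (x : nat -> carrier), q (e i) x = x i;
  N2 : forall x : carrier, q x e = x;
  N3 : forall (x : carrier) (y z : nat -> carrier),
         q (q x y) z = q x (fun i => q (y i) z)
}.

Arguments e {tau} _ _.
Arguments fconst {tau} _ _.
Arguments q {tau} _ _ _.

(** The constants (e_i and the f in tau) are trivially compatible; the only
    non-trivial condition is compatibility with the omega-ary q. *)
Definition congruence {tau} (C : ICA tau) (R : C -> C -> Prop) : Prop :=
  (forall x, R x x) /\
  (forall x y, R x y -> R y x) /\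
  (forall x y z, R x y -> R y z -> R x z) /\
  (forall (x y : C) (s t : nat -> C),
      R x y -> (forall i, R (s i) (t i)) -> R (q C x s) (q C y t)).

Definition principal_cong {tau} (C : ICA tau) (a b : C) : C -> C -> Prop :=
  fun x y => forall R, congruence C R -> R a b -> R x y.

Definition complementary_factor_congruences {tau} (C : ICA tau)
    (theta : nat -> C -> C -> Prop) : Prop :=
  (forall i, congruence C (theta i)) /\
  (forall x y : C, (forall i, theta i x y) -> x = y) /\
  (forall s : nat -> C, exists b : C, forall i, theta i b (s i)).

Definition central {tau} (C : ICA tau) (a : C) : Prop :=
  complementary_factor_congruences C (fun i => principal_cong C a (e C i)).

(* Main.v *)
Require Import Defs.
From Stdlib Require Import FunctionalExtensionality Arith.

Lemma pc_cong {tau} (C : ICA tau) (a b : C) : congruence C (principal_cong C a b).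
Proof.
  unfold principal_cong; split; [|split; [|split]].
  - intros x R [Hr _] _; apply Hr.
  - intros x y H R HR Hab; pose proof HR as [_ [Hs _]]; apply Hs, H; assumption.
  - intros x y z H1 H2 R HR Hab; pose proof HR as [_ [_ [Ht _]]].
    apply (Ht x y z); [apply H1|apply H2]; assumption.
  - intros x y s t H1 H2 R HR Hab; pose proof HR as [_ [_ [_ Hc]]].
    apply Hc; [apply H1|intro i; apply H2]; assumption.
Qed.

Definition upd {A} (i : nat) (x w : A) : nat -> A :=
  fun j => if PeanoNat.Nat.eq_dec j i then x else w.

Theorem lemma6p12 (tau : Type) (C : ICA tau) (a : C) :
  central C a <->
  ((forall x : C, q C a (fun _ => x) = x) /\
   (forall x : nat -> nat -> C,
      q C a (fun i => q C a (x i)) = q C a (fun i => x i i)) /\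
   (forall (y : nat -> C) (z : nat -> nat -> C),
      q C a (fun j => q C (y j) (fun i => z i j)) =
      q C (q C a y) (fun i => q C a (fun j => z i j)))).
Proof.
  split.
  - intros [Hc [Hid _]].
    assert (Hp : forall i, principal_cong C a (e C i) a (e C i)) by (intros i R _ H; exact H).
    assert (Hq : forall i x y s t, principal_cong C a (e C i) x y ->
              (forall k, principal_cong C a (e C i) (s k) (t k)) ->
              principal_cong C a (e C i) (q C x s) (q C y t))
      by (intros i; apply (Hc i)).
    assert (Hr : forall i x, principal_cong C a (e C i) x x) by (intros i; apply (Hc i)).
    assert (Hs : forall i x y, principal_cong C a (e C i) x y -> principal_cong C a (e C i) y x)
      by (intros i; apply (Hc i)).
    assert (Ht : forall i x y z, principal_cong C a (e C i) x y -> principal_cong C a (e C i) y z -> principal_cong C a (e C i) x z)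
      by (intros i; apply (Hc i)).
    split; [|split].
    + intros x; apply Hid; intros i.
      eapply Ht; [apply Hq; [apply Hp|intros; apply Hr]|]. rewrite N1; apply Hr.
    + intros x; apply Hid; intros i.
      eapply Ht; [apply Hq; [apply Hp|intros; apply Hr]|]. rewrite N1.
      eapply Ht; [apply Hq; [apply Hp|intros; apply Hr]|]. rewrite N1.
      apply Hs. eapply Ht; [apply Hq; [apply Hp|intros; apply Hr]|]. rewrite N1; apply Hr.
    + intros y z; apply Hid; intros i.
      eapply Ht; [apply Hq; [apply Hp|intros; apply Hr]|]. rewrite N1.
      apply Hs. apply Hq.
      * eapply Ht; [apply Hq; [apply Hp|intros; apply Hr]|]. rewrite N1; apply Hr.
      * intros k. eapply Ht; [apply Hq; [apply Hp|intros; apply Hr]|]. rewrite N1; apply Hr.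
  - intros [H1 [H2 H3]].
    set (R := fun i (x y : C) => forall w, q C a (upd i x w) = q C a (upd i y w)).
    assert (HRc : forall i, congruence C (R i)).
    { intros i; unfold R; split; [|split; [|split]].
      - reflexivity.
      - intros x y H w; symmetry; apply H.
      - intros x y z Hxy Hyz w; rewrite Hxy; apply Hyz.
      - intros x y s t Hxy Hst w.
        assert (Ex : forall x s, upd i (q C x s) w =
                  fun j => q C (upd i x (e C 0) j) (fun k => (fun k j => upd i (s k) w j) k j)).
        { intros x' s'; extensionality j; unfold upd.
          destruct (PeanoNat.Nat.eq_dec j i); [reflexivity|rewrite N1; reflexivity]. }
        rewrite (Ex x s), (Ex y t), !H3.
        rewrite (Hxy (e C 0)). f_equal. extensionality k. exact (Hst k w). }
    assert (HRa : forall i, R i a (e C i)).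
    { intros i w.
      assert (E1 : upd i a w = fun j => q C a ((fun j => if PeanoNat.Nat.eq_dec j i then e C else (fun _ => w)) j)).
      { extensionality j; unfold upd; destruct (PeanoNat.Nat.eq_dec j i);
          [rewrite N2|rewrite H1]; reflexivity. }
      assert (E2 : upd i (e C i) w = fun j => q C a ((fun j => if PeanoNat.Nat.eq_dec j i then (fun _ => e C i) else (fun _ => w)) j)).
      { extensionality j; unfold upd; destruct (PeanoNat.Nat.eq_dec j i);
          rewrite H1; reflexivity. }
      rewrite E1, E2, !H2. f_equal. extensionality j.
      destruct (PeanoNat.Nat.eq_dec j i); subst; reflexivity. }
    assert (Hsub : forall i x y, principal_cong C a (e C i) x y -> R i x y).
    { intros i x y H; apply H; [apply HRc|apply HRa]. }
    split; [|split].
    + intros i; apply pc_cong.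
    + intros x y H.
      assert (Hx : q C a (fun i => q C a (upd i x y)) = x).
      { rewrite H2. unfold upd. transitivity (q C a (fun _ => x)); [|apply H1]. f_equal. extensionality j.
        destruct (PeanoNat.Nat.eq_dec j j); [reflexivity|contradiction]. }
      assert (Hy : q C a (fun i => q C a (upd i x y)) = y).
      { transitivity (q C a (fun _ => y)); [|apply H1]. f_equal. extensionality i.
        rewrite (Hsub i x y (H i) y).
        assert (upd i y y = fun _ => y) as ->.
        { extensionality j; unfold upd; destruct (PeanoNat.Nat.eq_dec j i); reflexivity. }
        apply H1. }
      congruence.
    + intros s. exists (q C a s). intros i.
      rewrite <- (N1 _ C i s).
      destruct (pc_cong C a (e C i)) as [_ [_ [_ Hcq]]]. apply Hcq; [intros R0 _ Hab; exact Hab|intros k R0 HR _; apply (proj1 HR)].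
Qed.
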